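(* Let $n\in\mathbb{N}$ and $r>1$. Let $S'\subset\mathbb{R}^n$ be an $n$-simplex with $B(u,1/r)\subset S'\subset B(u,r)$ for some $u\in\mathbb{R}^n$. Let $F$ be a facet of $S'$ with supporting hyperplane $H$, and let $H^+,H^-$ be the two closed half-spaces determined by $H$, with $S'\subset H^+$ and $H^-$ disjoint from the interior of $S'$. Then there exists $v\in F$ such that $$B(v,1/r)\cap H^+\subset S'\qquad\text{and}\qquad B(v,1/r)\cap H\subset F\subset B(v,2r)\cap H.$$
   Context: $B(p,r)$ denotes the open Euclidean ball of radius $r$ centered at $p$. *)

(* Defs.v *)
From HB Require Import structures.
From mathcomp Require Import all_boot all_order all_algebra.
From mathcomp Require Import boolp classical_sets reals.
Set Implicit Arguments. Unset Strict Implicit. Unset Printing Implicit Defensive.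
Import Order.TTheory GRing.Theory Num.Theory.
Local Open Scope ring_scope.
Local Open Scope classical_set_scope.

Definition edot (R : realType) (n : nat) (x y : 'rV[R]_n) : R :=
  \sum_(i < n) x ord0 i * y ord0 i.

Definition enorm (R : realType) (n : nat) (x : 'rV[R]_n) : R :=
  Num.sqrt (edot x x).

Definition eball (R : realType) (n : nat) (p : 'rV[R]_n) (r : R)
  : set 'rV[R]_n := [set x | enorm (x - p) < r].

Definition einterior (R : realType) (n : nat) (A : set 'rV[R]_n)
  : set 'rV[R]_n := [set x | exists2 e : R, 0 < e & eball x e `<=` A].

Definition affinely_independent (R : realType) (n m : nat)
  (V : 'I_m -> 'rV[R]_n) : Prop :=
  forall l : 'I_m -> R,
    \sum_(i < m) l i = 0 -> \sum_(i < m) l i *: V i = 0 -> forall i, l i = 0.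

Definition conv_of (R : realType) (n m : nat) (V : 'I_m -> 'rV[R]_n)
  (P : pred 'I_m) : set 'rV[R]_n :=
  [set x | exists l : 'I_m -> R,
     [/\ forall i, 0 <= l i, forall i, ~~ P i -> l i = 0,
         \sum_(i < m) l i = 1 & x = \sum_(i < m) l i *: V i]].

Definition simplex (R : realType) (n m : nat) (V : 'I_m -> 'rV[R]_n)
  : set 'rV[R]_n := conv_of V predT.

Definition facet (R : realType) (n m : nat) (V : 'I_m -> 'rV[R]_n) (j : 'I_m)
  : set 'rV[R]_n := conv_of V (predC1 j).

Definition hyperplane (R : realType) (n : nat) (a : 'rV[R]_n) (b : R)
  : set 'rV[R]_n := [set x | edot a x = b].
Definition halfspace_ge (R : realType) (n : nat) (a : 'rV[R]_n) (b : R)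
  : set 'rV[R]_n := [set x | b <= edot a x].
Definition halfspace_le (R : realType) (n : nat) (a : 'rV[R]_n) (b : R)
  : set 'rV[R]_n := [set x | edot a x <= b].

(* Main.v *)
Require Import Defs.
From HB Require Import structures.
From mathcomp Require Import all_boot all_order all_algebra.
From mathcomp Require Import boolp classical_sets reals.
From mathcomp Require Import ring lra.
Import Order.TTheory GRing.Theory Num.Theory.
Local Open Scope ring_scope.
Local Open Scope classical_set_scope.

Section Aux.
Variable R : realType.
Variable n : nat.
Implicit Types x y z : 'rV[R]_n.

Lemma edotD x y z : edot x (y + z) = edot x y + edot x z.
Proof. rewrite /edot -big_split /=; apply: eq_bigr => i _; by rewrite mxE mulrDr. Qed.

Lemma edotN x y : edot x (- y) = - edot x y.
Proof. rewrite /edot -sumrN; apply: eq_bigr => i _; by rewrite mxE mulrN. Qed.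

Lemma edotB x y z : edot x (y - z) = edot x y - edot x z.
Proof. by rewrite edotD edotN. Qed.

Lemma edotZ x y (k : R) : edot x (k *: y) = k * edot x y.
Proof. rewrite /edot mulr_sumr; apply: eq_bigr => i _; by rewrite mxE mulrCA. Qed.

Lemma edot_sum m x (c : 'I_m -> R) (V : 'I_m -> 'rV[R]_n) :
  edot x (\sum_(i < m) c i *: V i) = \sum_(i < m) c i * edot x (V i).
Proof.
rewrite /edot.
under eq_bigr => k _ do rewrite summxE mulr_sumr.
rewrite exchange_big /=; apply: eq_bigr => i _; rewrite mulr_sumr.
by apply: eq_bigr => k _; rewrite mxE mulrCA.
Qed.

Lemma edot_ge0 x : 0 <= edot x x.
Proof. by apply: sumr_ge0 => i _; rewrite -expr2 sqr_ge0. Qed.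

Lemma edot_par x y : edot (x + y) (x + y) <= 2 * edot x x + 2 * edot y y.
Proof.
rewrite /edot !mulr_sumr -big_split /=; apply: ler_sum => i _.
rewrite !mxE; have := sqr_ge0 (x ord0 i - y ord0 i); rewrite expr2; nra.
Qed.

Lemma edot_opp x : edot (- x) (- x) = edot x x.
Proof. by rewrite /edot; apply: eq_bigr => i _; rewrite mxE mulrNN. Qed.

Lemma edotZZ x (t : R) : edot (t *: x) (t *: x) = t ^+ 2 * edot x x.
Proof.
rewrite /edot mulr_sumr; apply: eq_bigr => i _; rewrite !mxE; ring.
Qed.

Lemma enorm_lt x (r : R) : 0 < r -> (enorm x < r) = (edot x x < r ^+ 2).
Proof.
move=> r0; rewrite /enorm -{1}(gtr0_norm r0) -sqrtr_sqr ltr_sqrt //.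
by rewrite exprn_gt0.
Qed.

Lemma sum_delta m (i : 'I_m) (F : 'I_m -> 'rV[R]_n) :
  \sum_(k < m) (k == i)%:R *: F k = F i.
Proof.
rewrite (bigD1 i) //= eqxx scale1r big1 ?addr0 // => k /negPf ->.
by rewrite scale0r.
Qed.

Lemma sum_deltaR m (i : 'I_m) : \sum_(k < m) ((k == i)%:R : R) = 1.
Proof.
rewrite (bigD1 i) //= eqxx big1 ?addr0 // => k /negPf -> //.
Qed.

End Aux.

Theorem mainTheorem11 (R : realType) (n : nat) (r : R) (V : 'I_n.+1 -> 'rV[R]_n)
  (u : 'rV[R]_n) (j : 'I_n.+1) (a : 'rV[R]_n) (b : R) :
  1 < r ->
  affinely_independent V ->
  eball u r^-1 `<=` simplex V ->
  simplex V `<=` eball u r ->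
  a != 0 ->
  facet V j `<=` hyperplane a b ->
  simplex V `<=` halfspace_ge a b ->
  halfspace_le a b `&` einterior (simplex V) = set0 ->
  exists2 v, facet V j v &
    [/\ eball v r^-1 `&` halfspace_ge a b `<=` simplex V,
        eball v r^-1 `&` hyperplane a b `<=` facet V j
      & facet V j `<=` eball v (2 * r) `&` hyperplane a b].
Proof.
move=> r1 _ ballS Sball a0 facH SH _.
have r0 : 0 < r by lra.
set rho := r^-1.
have rho0 : 0 < rho by rewrite invr_gt0.
set A := edot a a.
have A0 : 0 < A.
  rewrite lt0r edot_ge0 andbT; apply/negP => /eqP.
  rewrite /A /edot => /eqP; rewrite psumr_eq0; last first.
    by move=> i _; rewrite -expr2 sqr_ge0.
  move=> /allP H; move/negP: a0; apply; apply/eqP/rowP => k.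
  have := H k (mem_index_enum _); rewrite -expr2 sqrf_eq0 => /eqP ->.
  by rewrite mxE.
set K := edot a (V j) - b.
have Vfac : forall i, i != j -> edot a (V i) = b.
  move=> i ij; apply: facH; exists (fun k => (k == i)%:R); split.
  - by move=> k; rewrite ler0n.
  - by move=> k /=; rewrite negbK => /eqP ->; rewrite eq_sym (negPf ij).
  - exact: sum_deltaR.
  - by rewrite sum_delta.
have coordE : forall c : 'I_n.+1 -> R, \sum_i c i = 1 ->
    edot a (\sum_i c i *: V i) - b = c j * K.
  move=> c c1; rewrite edot_sum -[b]mul1r -c1 mulr_suml -sumrB.
  rewrite (bigD1 j) //= big1 ?addr0 ?mulrBr //.
  by move=> i ij; rewrite Vfac // subrr.
have K0 : 0 <= K.
  rewrite subr_ge0; apply: SH; exists (fun k => (k == j)%:R); split.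
  - by move=> k; rewrite ler0n.
  - by [].
  - exact: sum_deltaR.
  - by rewrite sum_delta.
have le1 : forall c : 'I_n.+1 -> R, (forall i, 0 <= c i) -> \sum_i c i = 1 -> c j <= 1.
  move=> c c0 c1; rewrite -c1 (bigD1 j) //= lerDl; exact: sumr_ge0.
have uball : eball u rho u.
  rewrite /eball /= subrr enorm_lt // /edot big1 ?exprn_gt0 // => i _.
  by rewrite mxE mul0r.
have [l0 [l0ge _ l0s l0E]] := ballS u uball.
set t := rho / (1 + A).
have t0 : 0 < t by rewrite divr_gt0 //; lra.
have tball : eball u rho (u + t *: a).
  rewrite /eball /= addrC addKr enorm_lt // edotZZ -/A /t expr_div_n.
  have h0 : 0 < 1 + A by lra.
  rewrite mulrAC ltr_pdivrMr ?exprn_gt0 // ltr_pM2l ?exprn_gt0 //.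
  rewrite expr2; nra.
have [ly [lyge _ lys lyE]] := ballS _ tball.
have key : t * A = (ly j - l0 j) * K.
  have := coordE _ lys; have := coordE _ l0s; rewrite -lyE -l0E edotD edotZ.
  move=> e1 e2; rewrite mulrBl -e1 -e2 /A; ring.
have Kpos : 0 < K.
  rewrite lt0r K0 andbT; apply/eqP => K00; move: key; rewrite K00 mulr0.
  move=> /eqP; rewrite mulf_eq0; case/orP => /eqP; lra.
have l0j : l0 j < 1.
  have := le1 _ lyge lys; have : 0 < (ly j - l0 j) * K by rewrite -key mulr_gt0.
  rewrite pmulr_lgt0 //; lra.
set mu := (1 - l0 j)^-1.
have mu1 : 1 <= mu.
  rewrite /mu -[leRHS]mul1r ler_pdivlMr ?subr_gt0 //.
  have := l0ge j; lra.
have muE : mu * (1 - l0 j) = 1 by rewrite mulVf // subr_eq0 eq_sym lt_eqF.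
set cv := fun i => if i == j then 0 else mu * l0 i.
set v := \sum_i cv i *: V i.
have cvs : \sum_i cv i = 1.
  have e : 1 - l0 j = \sum_(i | i != j) l0 i.
    by rewrite -l0s (bigD1 j) //= addrC addrK.
  rewrite (bigD1 j) //= /cv eqxx add0r -muE e.
  rewrite mulr_sumr; apply: eq_bigr => i /negPf -> //.
have vfac : facet V j v.
  exists cv; split => //.
  - by move=> i; rewrite /cv; case: eqP => _ //; rewrite mulr_ge0 //; lra.
  - by move=> i /=; rewrite negbK /cv => ->.
have vS : simplex V v.
  case: vfac => c [c1 c2 c3 c4]; by exists c; split.
have main : forall x, eball v rho x -> exists c : 'I_n.+1 -> R,
    [/\ forall i, i != j -> 0 <= c i, \sum_i c i = 1,
        x = \sum_i c i *: V i & edot a x - b = c j * K].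
  move=> x xb.
  have xb' : eball u rho (u + (x - v)) by rewrite /eball /= addrC addKr.
  have [lp [lpge _ lps lpE]] := ballS _ xb'.
  pose c := fun i => cv i + lp i - l0 i.
  have cs : \sum_i c i = 1.
    by rewrite /c sumrB big_split /= cvs lps l0s addrK.
  have xE : x = \sum_i c i *: V i.
    rewrite /c; under eq_bigr => i _ do rewrite scalerBl scalerDl.
    by rewrite sumrB big_split /= -/v -lpE -l0E (addrC u) addrA addrK addrC subrK.
  exists c; split => //.
  - move=> i ij; rewrite /c /cv (negPf ij).
    have := lpge i; have := l0ge i; nra.
  - by rewrite xE coordE.
exists v => //; split.
- move=> x [xb xh]; have [c [c1 c2 c3 c4]] := main x xb.
  exists c; split => // i; case: (eqVneq i j) => [->|ij]; last by apply: c1.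
  have : 0 <= c j * K by rewrite -c4 subr_ge0.
  by rewrite pmulr_lge0.
- move=> x [xb xh]; have [c [c1 c2 c3 c4]] := main x xb.
  have cj0 : c j = 0.
    move: c4; rewrite xh subrr => /esym /eqP; rewrite mulf_eq0 (gt_eqF Kpos) orbF.
    by move/eqP.
  exists c; split => // i.
  + by case: (eqVneq i j) => [->|ij]; [rewrite cj0 | apply: c1].
  + by rewrite /= negbK => /eqP ->.
- move=> x xf; split; last exact: facH.
  have xS : simplex V x by case: xf => c [c1 c2 c3 c4]; exists c; split.
  have h1 := Sball _ xS; have h2 := Sball _ vS.
  move: h1 h2; rewrite /eball /= !enorm_lt //; last by rewrite mulr_gt0.
  have -> : x - v = (x - u) + - (v - u) by rewrite opprB addrA subrK.
  move=> h1 h2; have h3 := @edot_par _ _ (x - u) (- (v - u)).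
  rewrite edot_opp in h3; apply: (le_lt_trans h3).
  have e : (2 * r) ^+ 2 = 4 * r ^+ 2 by ring.
  rewrite e; move: h1 h2.
  set p := edot _ _; set q := edot _ _; set s := r ^+ 2.
  move=> h1 h2; lra.
Qed.
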